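(* For every odd $k\ge3$ there exists a finite connected $k$-regular simple graph that is not isomorphic to $\mathrm{Sch}(G/H;S)$ for any group $G$, subgroup $H\le G$, and symmetric generating set $S\subseteq G$ with $e\notin S$.
   Context: For a group $G$ and a symmetric generating set $S$ with $e\notin S$, the Cayley graph $\mathrm{Cay}(G;S)$ has vertex set $G$ and edges $\{g,sg\}$, $g\in G$, $s\in S$; $G$ acts on it from the right by $\{y_1,y_2\}.h=\{y_1h,y_2h\}$. For $H\le G$, the Schreier graph $\mathrm{Sch}(G/H;S)$ is the multigraph whose vertices are the left cosets $gH$ and whose (multi)edges are the $H$-orbits $\{\{y_1h,y_2h\}:h\in H\}$ of edges of $\mathrm{Cay}(G;S)$, such an orbit joining $y_1H$ and $y_2H$ (loops and multiple edges allowed). Isomorphism is isomorphism of multigraphs. *)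

(* Defs.v *)
From mathcomp Require Import all_boot.
Set Implicit Arguments. Unset Strict Implicit. Unset Printing Implicit Defensive.

Section Groups.
Variables (G : Type) (mul : G -> G -> G) (e : G) (inv : G -> G).

Definition is_group : Prop :=
  (forall x y z, mul x (mul y z) = mul (mul x y) z) /\
  (forall x, mul e x = x /\ mul x e = x) /\
  (forall x, mul (inv x) x = e /\ mul x (inv x) = e).

Definition is_subgroup (H : G -> Prop) : Prop :=
  H e /\ (forall x y, H x -> H y -> H (mul x y)) /\ (forall x, H x -> H (inv x)).

Definition generates (S : G -> Prop) : Prop :=
  forall K : G -> Prop, is_subgroup K -> (forall s, S s -> K s) -> forall g, K g.

Variables (H : G -> Prop) (S : G -> Prop).

(* vertices of Sch(G/H;S): elements of G up to "same left coset" *)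
Definition same_coset (g g' : G) : Prop := H (mul (inv g) g').

(* a pair (y1,y2) represents the Cayley edge {y1, s y1} with s = y2 y1^-1 in S *)
Definition cay_edge (p : G * G) : Prop := S (mul p.2 (inv p.1)).

(* two Cayley edges (as unordered pairs) lie in the same H-orbit under the
   right action {y1,y2}.h = {y1 h, y2 h} *)
Definition same_orbit (p q : G * G) : Prop :=
  exists h, H h /\
    ((q.1 = mul p.1 h /\ q.2 = mul p.2 h) \/ (q.1 = mul p.2 h /\ q.2 = mul p.1 h)).

Definition sch_joins (p : G * G) (a b : G) : Prop :=
  (same_coset p.1 a /\ same_coset p.2 b) \/ (same_coset p.1 b /\ same_coset p.2 a).

(* the simple graph (V, adj) is isomorphic, as a multigraph, to Sch(G/H;S):
   phi induces a bijection V -> G/H, psi a bijection from the (unordered)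
   edges of (V, adj) onto the H-orbits of Cayley edges, and psi respects
   incidence. *)
Definition schreier_iso (V : finType) (adj : rel V) : Prop :=
  exists (phi : V -> G) (psi : V -> V -> G * G),
    (forall g, exists v, same_coset (phi v) g) /\
    (forall u v, same_coset (phi u) (phi v) -> u = v) /\
    (forall u v, adj u v -> cay_edge (psi u v)) /\
    (forall u v, adj u v -> same_orbit (psi u v) (psi v u)) /\
    (forall p, cay_edge p -> exists u v, adj u v /\ same_orbit (psi u v) p) /\
    (forall u v u' v', adj u v -> adj u' v' -> same_orbit (psi u v) (psi u' v') ->
        (u = u' /\ v = v') \/ (u = v' /\ v = u')) /\
    (forall u v, adj u v -> sch_joins (psi u v) (phi u) (phi v)).

End Groups.

(* Main.v *)
Require Import Defs.
From mathcomp Require Import all_boot zify.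
From Stdlib Require Import Classical ClassicalEpsilon.
Set Implicit Arguments. Unset Strict Implicit. Unset Printing Implicit Defensive.

Section GroupFacts.
Variables (G : Type) (mul : G -> G -> G) (e : G) (inv : G -> G).
Hypothesis Gg : is_group mul e inv.
Variable H : G -> Prop.
Hypothesis Hs : is_subgroup mul e inv H.

Lemma mulA x y z : mul x (mul y z) = mul (mul x y) z.
Proof. by case: Gg => A _; apply: A. Qed.
Lemma mul1 x : mul e x = x.
Proof. by case: Gg => _ [B _]; case: (B x). Qed.
Lemma mul1r x : mul x e = x.
Proof. by case: Gg => _ [B _]; case: (B x). Qed.
Lemma mulV x : mul (inv x) x = e.
Proof. by case: Gg => _ [_ C]; case: (C x). Qed.
Lemma mulVr x : mul x (inv x) = e.
Proof. by case: Gg => _ [_ C]; case: (C x). Qed.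
Lemma inv_uniq x y : mul x y = e -> inv x = y.
Proof. move=> E; by rewrite -(mul1r (inv x)) -E mulA mulV mul1. Qed.
Lemma invK x : inv (inv x) = x.
Proof. apply: inv_uniq; exact: mulV. Qed.
Lemma invM x y : inv (mul x y) = mul (inv y) (inv x).
Proof.
apply: inv_uniq. by rewrite -mulA (mulA y) mulVr mul1 mulVr.
Qed.
Lemma cancel_r a b c : mul a c = mul b c -> a = b.
Proof.
move=> E. by rewrite -(mul1r a) -(mulVr c) mulA E -mulA mulVr mul1r.
Qed.
Lemma mulKV s y : mul (inv s) (mul s y) = y.
Proof. by rewrite mulA mulV mul1. Qed.
Lemma mulVK a b : mul (mul a (inv b)) b = a.
Proof. by rewrite -mulA mulV mul1r. Qed.

Lemma He : H e. Proof. by case: Hs. Qed.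
Lemma HM x y : H x -> H y -> H (mul x y). Proof. by case: Hs => _ [A _]; apply: A. Qed.
Lemma HV x : H x -> H (inv x). Proof. by case: Hs => _ [_ A]; apply: A. Qed.

Lemma sc_refl a : same_coset mul inv H a a.
Proof. rewrite /same_coset mulV; exact: He. Qed.
Lemma sc_sym a b : same_coset mul inv H a b -> same_coset mul inv H b a.
Proof. rewrite /same_coset => /HV; by rewrite invM invK. Qed.
Lemma sc_trans a b c : same_coset mul inv H a b -> same_coset mul inv H b c ->
  same_coset mul inv H a c.
Proof.
rewrite /same_coset => A B; have := HM A B.
by rewrite -mulA (mulA b) mulVr mul1.
Qed.
Lemma sc_mulr a h : H h -> same_coset mul inv H a (mul a h).
Proof. by rewrite /same_coset mulA mulV mul1. Qed.

Lemma so_refl p : same_orbit mul H p p.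
Proof. exists e; split; first exact: He. left; by rewrite !mul1r. Qed.
Lemma so_swap p : same_orbit mul H p (p.2, p.1).
Proof. exists e; split; first exact: He. right; by rewrite !mul1r. Qed.
Lemma so_mul y1 y2 h : H h -> same_orbit mul H (y1, y2) (mul y1 h, mul y2 h).
Proof. move=> Hh; exists h; split => //; by left. Qed.
Lemma so_sym p q : same_orbit mul H p q -> same_orbit mul H q p.
Proof.
case: p q => [p1 p2] [q1 q2] /=.
case=> h [Hh [[/= -> ->]|[/= -> ->]]]; exists (inv h); split; try exact: HV.
- left; by rewrite -!mulA !mulVr !mul1r.
- right; by rewrite -!mulA !mulVr !mul1r.
Qed.
Lemma so_trans p q r : same_orbit mul H p q -> same_orbit mul H q r ->
  same_orbit mul H p r.
Proof.
case: p q r => [p1 p2] [q1 q2] [r1 r2].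
case=> h [Hh E1] [h' [Hh' E2]]; exists (mul h h'); split; first exact: HM.
case: E1 => [[/= E1 E1']|[/= E1 E1']]; case: E2 => [[/= -> ->]|[/= -> ->]];
  rewrite E1 E1' -!mulA; by [left|right].
Qed.

Lemma sc_orbit x h a : H h -> same_coset mul inv H (mul x h) a -> same_coset mul inv H x a.
Proof. move=> Hh; apply: sc_trans; exact: sc_mulr. Qed.

Lemma joins_orbit q p a b : same_orbit mul H q p -> sch_joins mul inv H q a b ->
  sch_joins mul inv H p a b.
Proof.
case: p q => [p1 p2] [q1 q2].
move=> /so_sym [h [Hh [[E1 E2]|[E1 E2]]]]; rewrite /sch_joins E1 E2 /=.
- case=> [[A B]|[A B]]; [left|right]; split; apply: sc_orbit Hh _ => //.
- case=> [[A B]|[A B]]; [right|left]; split; apply: sc_orbit Hh _ => //.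
Qed.

End GroupFacts.

Lemma invol_even (T : finType) (f : T -> T) (n : nat) (A : {set T}) :
  #|A| = n ->
  {in A, forall x, f x \in A} -> {in A, forall x, f (f x) = x} ->
  {in A, forall x, f x != x} -> ~~ odd #|A|.
Proof.
elim/ltn_ind: n A => n IH A cA Acl Ainv Anf.
case: (set_0Vmem A) => [->|[x xA]]; first by rewrite cards0.
have fxA := Acl x xA.
have fxx := Anf x xA.
set A' := (A :\ x) :\ f x.
have c1 : #|A| = #|A :\ x|.+1 by rewrite (cardsD1 x A) xA.
have fxA' : f x \in A :\ x by rewrite !inE fxx.
have c2 : #|A :\ x| = #|A'|.+1 by rewrite (cardsD1 (f x) (A :\ x)) fxA'.
have : ~~ odd #|A'|.
  apply: (IH #|A'|); [ | by [] | | | ].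
  - rewrite -cA c1 c2; exact: leqnSn.
  - move=> y; rewrite !inE => /and3P [y1 y2 yA]; rewrite Acl // andbT.
    apply/andP; split.
    + apply/eqP => E; move/eqP: y2; apply; by rewrite -(Ainv y yA) E Ainv.
    + apply/eqP => E; move/eqP: y1; apply; by rewrite -(Ainv y yA) E.
  - move=> y; rewrite !inE => /and3P [_ _ yA]; exact: Ainv.
  - move=> y; rewrite !inE => /and3P [_ _ yA]; exact: Anf.
by rewrite c1 c2 /= negbK.
Qed.

Lemma invol_fix (T : finType) (f : T -> T) (A : {set T}) :
  {in A, forall x, f x \in A} -> {in A, forall x, f (f x) = x} ->
  odd #|A| -> exists2 x, x \in A & f x = x.
Proof.
move=> Acl Ainv oA.
case: (pickP [pred x in A | f x == x]) => [x /andP [xA /eqP fx]|none].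
  by exists x.
have := @invol_even T f _ A erefl Acl Ainv.
rewrite oA => H; exfalso; apply: notF; apply: H => x xA.
have := none x; rewrite /= xA /=; by move=> ->.
Qed.

Section Schreier.
Variables (G : Type) (mul : G -> G -> G) (e : G) (inv : G -> G).
Hypothesis Gg : is_group mul e inv.
Variable H : G -> Prop.
Hypothesis Hs : is_subgroup mul e inv H.
Variable S : G -> Prop.
Hypothesis Ssym : forall s, S s -> S (inv s).
Variables (V : finType) (adj : rel V).
Hypothesis adj_sym : symmetric adj.
Hypothesis adj_irr : irreflexive adj.
Variables (phi : V -> G) (psi : V -> V -> G * G).
Hypothesis P2 : forall u v, same_coset mul inv H (phi u) (phi v) -> u = v.
Hypothesis P3 : forall u v, adj u v -> cay_edge mul inv S (psi u v).
Hypothesis P4 : forall u v, adj u v -> same_orbit mul H (psi u v) (psi v u).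
Hypothesis P5 : forall p, cay_edge mul inv S p -> exists u v, adj u v /\ same_orbit mul H (psi u v) p.
Hypothesis P6 : forall u v u' v', adj u v -> adj u' v' -> same_orbit mul H (psi u v) (psi u' v') ->
        (u = u' /\ v = v') \/ (u = v' /\ v = u').
Hypothesis P7 : forall u v, adj u v -> sch_joins mul inv H (psi u v) (phi u) (phi v).

Definition E u v s := adj u v /\ exists y, same_coset mul inv H (phi u) y /\
  same_coset mul inv H (phi v) (mul s y) /\ same_orbit mul H (psi u v) (y, mul s y).

Lemma F1 u v : adj u v -> exists s, S s /\ E u v s.
Proof.
move=> uv; have := P7 uv; have := P3 uv; rewrite /cay_edge /sch_joins.
case Ep: (psi u v) => [q1 q2] /= Sq [[A B]|[A B]].
- exists (mul q2 (inv q1)); split => //; split => //; exists q1.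
  rewrite (mulVK Gg); split; [exact: (sc_sym Gg Hs A)|split; [exact: (sc_sym Gg Hs B)|rewrite Ep; exact (so_refl Gg Hs (q1,q2))]].
- exists (mul q1 (inv q2)); split.
    by have := Ssym Sq; rewrite (invM Gg) (invK Gg).
  split => //; exists q2.
  rewrite (mulVK Gg); split; [exact: (sc_sym Gg Hs B)|split; [exact: (sc_sym Gg Hs A)|rewrite Ep; exact (so_swap Gg Hs (q1,q2))]].
Qed.

Lemma F2 u v w s : E u v s -> E u w s -> v = w.
Proof.
move=> [uv [y [A [B C]]]] [uw [y' [A' [B' C']]]].
have Hh : same_coset mul inv H y y' by exact: (sc_trans Gg Hs (sc_sym Gg Hs A) A').
have E1 : y' = mul y (mul (inv y) y') by rewrite (mulA Gg) (mulVr Gg) (mul1 Gg).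
have so1 : same_orbit mul H (y, mul s y) (y', mul s y').
  rewrite E1 (mulA Gg s); exact (@so_mul _ mul H y (mul s y) (mul (inv y) y') Hh).
have : same_orbit mul H (psi u v) (psi u w).
  exact (so_trans Gg Hs C (so_trans Gg Hs so1 (so_sym Gg Hs C'))).
case/(P6 uv uw) => [[_ //]|[E3 E2]]; move: uv; by rewrite E2 adj_irr.
Qed.

Lemma F3 u s : S s -> exists v, E u v s.
Proof.
move=> Ss.
have ce : cay_edge mul inv S (phi u, mul s (phi u)).
  by rewrite /cay_edge /= -(mulA Gg) (mulVr Gg) (mul1r Gg).
case: (P5 ce) => u' [v' [uv so]].
have := joins_orbit Gg Hs so (P7 uv); rewrite /sch_joins /=.
case=> [[A B]|[A B]].
- have Eu := P2 A; subst u'; exists v'; split => //; exists (phi u).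
  split; first exact (sc_refl Gg Hs _). by split; first exact (sc_sym Gg Hs B).
- have Eu := P2 A; subst v'; exists u'; split; first by rewrite adj_sym.
  exists (phi u); split; first exact (sc_refl Gg Hs _). split; first exact (sc_sym Gg Hs B).
  exact (so_trans Gg Hs (so_sym Gg Hs (P4 uv)) so).
Qed.

Lemma F4 u v s : E u v s -> E v u (inv s).
Proof.
move=> [uv [y [A [B C]]]]; split; first by rewrite adj_sym.
exists (mul s y); rewrite (mulKV Gg); split => //; split => //.
exact (so_trans Gg Hs (so_sym Gg Hs (P4 uv)) (so_trans Gg Hs C (so_swap Gg Hs _))).
Qed.

Lemma F5 u v s t : E u v s -> E u v t -> s = t.
Proof.
move=> [uv [y [A [B C]]]] [_ [y' [A' [B' C']]]].
have := so_trans Gg Hs (so_sym Gg Hs C) C'.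
case=> h [Hh [[/= E1 E2]|[/= E1 E2]]].
- apply/esym/(cancel_r Gg (c := mul y h)); by rewrite -E1 E2 E1 (mulA Gg).
- have : same_coset mul inv H (phi u) (phi v).
    have X : same_coset mul inv H (mul s y) y'.
      rewrite E1; exact (@sc_mulr _ _ _ _ Gg H (mul s y) h Hh).
    exact (sc_trans Gg Hs A' (sc_sym Gg Hs (sc_trans Gg Hs B X))).
  move/P2 => uvE; by rewrite uvE adj_irr in uv.
Qed.


Lemma matching (c : V) : odd #|[set w | adj c w]| ->
  exists M : V -> V, forall u, adj u (M u) /\ M (M u) = u.
Proof.
move=> oc.
have ex1 : forall v, exists w, adj c v -> exists s, S s /\ E c v s /\ E c w (inv s).
  move=> v; case: (boolP (adj c v)) => cv; last by exists v.
  case: (F1 cv) => s [Ss Es]; case: (F3 c (Ssym Ss)) => w Ew.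
  by exists w => _; exists s.
pose f v := proj1_sig (constructive_indefinite_description _ (ex1 v)).
have fP v : adj c v -> exists s, S s /\ E c v s /\ E c (f v) (inv s).
  exact: (proj2_sig (constructive_indefinite_description _ (ex1 v))).
have [v0 v0A fv0] : exists2 v, v \in [set w | adj c w] & f v = v.
  apply: invol_fix oc.
  - move=> v; rewrite inE => cv; case: (fP v cv) => s [_ [_ [H1 _]]]; by rewrite inE.
  - move=> v; rewrite inE => cv; case: (fP v cv) => s [Ss [Es Efs]].
    have cfv : adj c (f v) by case: Efs.
    case: (fP _ cfv) => t [_ [Et Efft]].
    have ts : t = inv s := F5 Et Efs.
    rewrite ts (invK Gg) in Efft.
    exact: esym (F2 Es Efft).
rewrite inE in v0A.
case: (fP _ v0A) => s [Ss [Es Efs]]; rewrite fv0 in Efs.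
have ss : inv s = s := esym (F5 Es Efs).
have ex2 : forall u, exists w, E u w s := fun u => F3 u Ss.
pose M u := proj1_sig (constructive_indefinite_description _ (ex2 u)).
have MP u : E u (M u) s := proj2_sig (constructive_indefinite_description _ (ex2 u)).
exists M => u; split; first by case: (MP u).
have := F4 (MP u); rewrite ss => H1.
exact: esym (F2 H1 (MP (M u))).
Qed.

End Schreier.

Section Graph.
Variable k : nat.
Hypothesis k3 : 3 <= k.
Hypothesis kodd : odd k.

Definition VT := option ('I_k * option 'I_k.+1).

Definition adjG (u v : VT) : bool :=
  match u, v with
  | None, Some (_, None) => true
  | Some (_, None), None => true
  | Some (i, None), Some (i', Some j) => (i == i') && (j < k.-1)
  | Some (i, Some j), Some (i', None) => (i == i') && (j < k.-1)
  | Some (i, Some j), Some (i', Some j') => [&& i == i', j != j' & j + j' != k.-2]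
  | _, _ => false
  end.

Lemma adjG_sym : symmetric adjG.
Proof.
move=> [[i [j|]]|] [[i' [j'|]]|] //=; by rewrite ?(eq_sym i) ?(eq_sym j) ?(addnC j).
Qed.

Lemma adjG_irr : irreflexive adjG.
Proof. by move=> [[i [j|]]|] //=; rewrite !eqxx. Qed.

Lemma conn_c v : connect adjG v None.
Proof.
case: v => [[i [j|]]|]; [|exact: connect1|exact: connect0].
have aic : connect adjG (Some (i, None)) None by exact: connect1.
case: (ltnP j k.-1) => jk.
  apply: connect_trans aic; apply: connect1 => /=; by rewrite eqxx jk.
have k0 : 0 < k.+1 by [].
apply: (connect_trans (y := Some (i, Some (Ordinal k0)) : VT)).
  apply: connect1 => /=; rewrite eqxx /= addn0; apply/andP; split; [apply/eqP => /(congr1 val) /= | apply/eqP]; lia.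
apply: connect_trans aic; apply: connect1 => /=; rewrite eqxx /=; lia.
Qed.

Lemma adjG_conn u v : connect adjG u v.
Proof.
apply: connect_trans (conn_c u) _.
by rewrite (sym_connect_sym adjG_sym) conn_c.
Qed.


Definition fa (i : 'I_k) : VT := Some (i, None).
Definition fx (i : 'I_k) (j : 'I_k.+1) : VT := Some (i, Some j).

Lemma fa_inj : injective fa. Proof. by move=> x y [->]. Qed.
Lemma fx_inj i : injective (fx i). Proof. by move=> x y [->]. Qed.

Lemma mem_fx i i' j (A : {set 'I_k.+1}) :
  (Some (i', Some j) \in fx i @: A) = (i == i') && (j \in A).
Proof.
apply/imsetP/andP => [[x xA [-> ->]]|[/eqP -> jA]]; first by rewrite eqxx.
by exists j.
Qed.
Lemma mem_fx_a i i' (A : {set 'I_k.+1}) : (Some (i', None) \in fx i @: A) = false.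
Proof. by apply/negbTE/negP => /imsetP [x _ []]. Qed.
Lemma mem_fx_c i (A : {set 'I_k.+1}) : (None \in fx i @: A) = false.
Proof. by apply/negbTE/negP => /imsetP [x _ []]. Qed.
Lemma mem_fa i' (A : {set 'I_k}) : (Some (i', None) \in fa @: A) = (i' \in A).
Proof.
apply/imsetP/idP => [[x xA [->]] //|iA]. by exists i'.
Qed.
Lemma mem_fa_x i' j (A : {set 'I_k}) : (Some (i', Some j) \in fa @: A) = false.
Proof. by apply/negbTE/negP => /imsetP [x _ []]. Qed.
Lemma mem_fa_c (A : {set 'I_k}) : (None \in fa @: A) = false.
Proof. by apply/negbTE/negP => /imsetP [x _ []]. Qed.

Lemma card_lt (n m : nat) (le : m <= n) : #|[set j : 'I_n | j < m]| = m.
Proof.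
have -> : [set j : 'I_n | j < m] = [set widen_ord le j | j in 'I_m].
  apply/setP => j; rewrite inE; apply/idP/imsetP => [jm|[x _ ->] /=].
    by exists (Ordinal jm) => //; apply: val_inj.
  exact: ltn_ord.
rewrite card_imset ?card_ord //.
by move=> x y /(congr1 val) /= /val_inj.
Qed.

Lemma deg v : #|[set w | adjG v w]| = k.
Proof.
case: v => [[i [j|]]|].
- pose J := [set j' : 'I_k.+1 | (j != j') && (j + j' != k.-2)].
  have -> : [set w | adjG (Some (i, Some j)) w] =
      if j < k.-1 then fa i |: fx i @: J else fx i @: J.
    apply/setP => -[[i' [j'|]]|]; case: ifP => jk;
      rewrite ?inE ?mem_fx ?mem_fx_a ?mem_fx_c /= ?inE ?jk ?andbT ?andbA //.
    all: rewrite ?andbF ?orbF //.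
    - by rewrite (negbTE (_ : Some (i', Some j') != fa i)) //; apply/eqP => E; inversion E.
    - by rewrite eq_sym; apply/eqP/eqP => [->|E] //; inversion E.
  case: ifP => jk.
  + rewrite cardsU1 card_imset; last exact: fx_inj.
    have -> : fa i \notin fx i @: J by rewrite mem_fx_a.
    pose p : 'I_k.+1 := inord (k.-2 - j).
    have vp : nat_of_ord p = k.-2 - j by rewrite /p inordK //; lia.
    have -> : J = [set~ j] :\ p.
      apply/setP => j'; rewrite !inE -!(inj_eq val_inj) /= vp.
      case: (boolP (j == j' :> nat)) => [/eqP E|/eqP E] /=.
        rewrite E eqxx /= andbF //.
      have -> : (j' != j :> nat) by apply/eqP => E'; apply: E.
      rewrite andbT; apply/idP/idP => /eqP H; apply/eqP; lia.
    have := cardsD1 p [set~ j]; rewrite cardsC1 card_ord !inE.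
    have -> : p != j.
      apply/eqP => E; move: vp; rewrite E => vp.
      have := odd_double_half k; rewrite kodd -muln2 => hk; lia.
    move=> /= E1; lia.
  + rewrite card_imset; last exact: fx_inj.
    have -> : J = [set~ j].
      apply/setP => j'; rewrite !inE.
      have -> : j + j' != k.-2 by apply/eqP; move/negbT: jk; rewrite -leqNgt; lia.
      by rewrite andbT eq_sym.
    by rewrite cardsC1 card_ord.
- have -> : [set w | adjG (Some (i, None)) w] = None |: fx i @: [set j : 'I_k.+1 | j < k.-1].
    apply/setP => -[[i' [j'|]]|];
      rewrite ?inE ?mem_fx ?mem_fx_a ?mem_fx_c /= ?inE //.
  rewrite cardsU1 mem_fx_c card_imset ?card_lt; [lia | lia | exact: fx_inj].
- have -> : [set w | adjG None w] = fa @: [set: 'I_k].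
    apply/setP => -[[i' [j'|]]|];
      rewrite ?inE ?mem_fa ?mem_fa_x ?mem_fa_c /= ?inE //.
  by rewrite card_imset ?cardsT ?card_ord //; exact: fa_inj.
Qed.

Lemma no_match (M : VT -> VT) : (forall u, adjG u (M u) /\ M (M u) = u) -> False.
Proof.
move=> HM.
have [i0 Mc] : exists i0, M None = Some (i0, None).
  have := (HM None).1; case: (M None) => [[i0 [j|]]|] //= _; by exists i0.
have : 0 < #|[set~ i0]| by rewrite cardsC1 card_ord; lia.
case/card_gt0P => i1; rewrite !inE => ne.
pose g (o : option 'I_k.+1) : VT := Some (i1, o).
have ginj : injective g by move=> x y [].
pose B := g @: [set: option 'I_k.+1].
have cB : #|B| = k.+2 by rewrite card_imset // cardsT card_option card_ord.
have := @invol_even _ M _ B erefl.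
rewrite cB /= kodd /= => H; apply: notF; apply: H.
- move=> v /imsetP [o _ ->].
  have := HM (g o); case E: (M (g o)) => [[i' o']|] [A Bq].
    apply/imsetP; exists o' => //; rewrite /g; congr (Some (_, _)).
    move: A; clear E Bq; rewrite /g; case: o => [j|]; case: o' => [j'|] //= => /andP [/eqP -> _] //.
  move: Bq; rewrite Mc /g => -[E1 _]; by rewrite E1 eqxx in ne.
- move=> v _; exact: (HM v).2.
- move=> v _; apply/eqP => E; have := (HM v).1; by rewrite E adjG_irr.
Qed.

End Graph.

Theorem propositionA (k : nat) :
  3 <= k -> odd k ->
  exists (V : finType) (adj : rel V),
    0 < #|V| /\ symmetric adj /\ irreflexive adj /\
    (forall v : V, #|[set w | adj v w]| = k) /\
    (forall u v : V, connect adj u v) /\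
    (forall (G : Type) (mul : G -> G -> G) (e : G) (inv : G -> G),
       is_group mul e inv ->
       forall H : G -> Prop, is_subgroup mul e inv H ->
       forall S : G -> Prop, (forall s, S s -> S (inv s)) -> ~ S e ->
         generates mul e inv S ->
         ~ schreier_iso mul inv H S adj).
Proof.
move=> k3 kodd.
exists (VT k), (@adjG k).
split; first by rewrite card_option.
split; first exact: adjG_sym.
split; first exact: adjG_irr.
split; first by move=> v; exact: deg.
split; first by move=> u v; exact: adjG_conn.
move=> G mul e inv Gg H Hs S Ssym _ _ [phi [psi [P1 [P2 [P3 [P4 [P5 [P6 P7]]]]]]]].
have oc : odd #|[set w | @adjG k None w]| by rewrite (deg k3 kodd).
have [M HM] := matching Gg Hs Ssym (@adjG_sym k) (@adjG_irr k) P2 P3 P4 P5 P6 P7 oc.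
exact: (no_match k3 kodd HM).
Qed.
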